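(* For every parameter $(\alpha,\theta,\nu)$ where $\nu$ is a probability distribution on the positive integers and either ($0<\alpha<1$ and $\theta>-\alpha$) or ($\alpha<0$ and $\theta=-k\alpha$ for some positive integer $k$), the Hollywood process $(\mathcal{Y}_n)_{n\ge1}$ with parameter $(\alpha,\theta,\nu)$ determines an edge exchangeable probability distribution on $\mathfrak{E}_{\mathbb{N}}$.
   Context: $\mathrm{fin}(\mathcal{P})$ is the set of finite sequences of elements of $\mathcal{P}$. An interaction process $\mathcal{I}:S\to\mathrm{fin}(\mathcal{P})$ ($S\subseteq\mathbb{N}$) induces the edge-labeled network $\mathcal{E}_{\mathcal{I}}$: the equivalence class of $\mathcal{I}$ under relabeling vertices by bijections $\rho$ of the population (acting entrywise on each sequence), keeping edge labels $i\in S$. $\mathfrak{E}_S$ is the set of such networks; restriction to $S'\subseteq S$ deletes edges labeled outside $S'$. For a permutation $\sigma$ of $S$, $\mathcal{E}^\sigma$ is induced by $\mathcal{I}^\sigma(i)=\mathcal{I}(\sigma^{-1}(i))$. A random $\mathcal{Y}\in\mathfrak{E}_S$ is edge exchangeable if $\mathcal{Y}^\sigma$ has the same distribution as $\mathcal{Y}$ for every permutation $\sigma:S\to S$. Hollywood process with parameter $(\alpha,\theta,\nu)$: generate $X_1,X_2,\dots$ as follows. For each $n$, independently draw $K_n\sim\nu$; given $K_n=k$ choose $X_{n,1},\dots,X_{n,k}$ sequentially. Let $V_n(j)$ be the number of distinct labels among $X_1,\dots,X_{n-1},X_{n,1},\dots,X_{n,j-1}$ (labels are $1,2,\dots$ assigned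 in order of first appearance), and for $i\le V_n(j)$ let $D_{n,j}(i)$ be the number of occurrences of label $i$ among these. Then $\mathrm{pr}(X_{n,j}=i\mid\text{past})\propto D_{n,j}(i)-\alpha$ for $i=1,\dots,V_n(j)$ and $\propto\theta+\alpha V_n(j)$ for $i=V_n(j)+1$. Set $X_n=(X_{n,1},\dots,X_{n,K_n})$, $\mathcal{X}_n:[n]\to\mathrm{fin}(\mathbb{N})$, $\mathcal{X}_n(i)=X_i$, and $\mathcal{Y}_n=\mathcal{E}_{\mathcal{X}_n}\in\mathfrak{E}_{[n]}$. The $\mathcal{Y}_n$ are consistent under restriction and define a random element of $\mathfrak{E}_{\mathbb{N}}$. *)

(* Defs.v *)
From HB Require Import structures.
From mathcomp Require Import all_boot all_order all_algebra.
From mathcomp Require Import classical_sets reals constructive_ereal ereal esum.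
Set Implicit Arguments. Unset Strict Implicit. Unset Printing Implicit Defensive.
Import Order.TTheory GRing.Theory Num.Theory.
Local Open Scope ring_scope.

(* Population P = nat.  An interaction process on the edge-label set
   [n] = {0,...,n-1} (0-based) is a sequence of length n of finite
   sequences of elements of nat: edge i carries (nth [::] I i). *)
Definition iproc := seq (seq nat).

(* Two interaction processes induce the same edge-labeled network iff one
   is obtained from the other by relabeling vertices by a bijection rho of
   the population, acting entrywise; edge labels are kept. *)
Definition same_network (I J : iproc) : Prop :=
  exists rho : nat -> nat, bijective rho /\ J = map (map rho) I.

Section Hollywood.
Variables (R : realType) (alpha theta : R) (nu : nat -> R).

(* Unnormalized weight of choosing label x given the flattened past
   sequence of labels; labels are 0,1,2,... in order of first appearance,
   V = number of distinct labels so far, D(i) = count of i in the past. *)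
Definition hw_weight (past : seq nat) (x : nat) : R :=
  let V := size (undup past) in
  if (x < V)%N then (count_mem x past)%:R - alpha
  else if (x == V)%N then theta + alpha * V%:R else 0.

(* Normalized choice probability ("proportional to" the weights).  With an
   empty past the only possible label is the new one, chosen w.p. 1. *)
Definition hw_choice (past : seq nat) (x : nat) : R :=
  if past is [::] then (x == 0)%:R
  else hw_weight past x /
       (\sum_(i < (size (undup past)).+1) hw_weight past i).

Fixpoint hw_edge_prob (past : seq nat) (x : seq nat) : R :=
  if x is a :: x' then hw_choice past a * hw_edge_prob (rcons past a) x'
  else 1.

(* Probability of a history X_1, ..., X_m (K_n ~ nu independently). *)
Fixpoint hw_hist_prob_aux (past : seq nat) (h : iproc) : R :=
  if h is x :: h' then
    nu (size x) * hw_edge_prob past x * hw_hist_prob_aux (past ++ x) h'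
  else 1.

Definition hw_hist_prob (h : iproc) : R := hw_hist_prob_aux [::] h.

(* pr(Y_n = class of y), where Y_n is the network induced by X_1..X_n. *)
Definition hw_law (n : nat) (y : iproc) : \bar R :=
  \esum_(h in [set h : iproc | size h = n /\ same_network h y])
     (hw_hist_prob h)%:E.

(* pr( (Y^sigma restricted to [n]) = class of y ), computed from the first
   m edges X_1..X_m, where tau = sigma^{-1} and tau i < m for all i < n:
   I^sigma(i) = I(sigma^{-1} i). *)
Definition hw_law_perm (tau : nat -> nat) (n m : nat) (y : iproc) : \bar R :=
  \esum_(h in [set h : iproc | size h = m /\
            same_network [seq nth [::] h (tau i) | i <- iota 0 n] y])
     (hw_hist_prob h)%:E.

End Hollywood.

Definition prob_on_pos (R : realType) (nu : nat -> R) : Prop :=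
  nu 0 = 0 /\ (forall k, 0 <= nu k) /\
  (\esum_(k in [set: nat]) (nu k)%:E = 1%E).

Definition hw_param (R : realType) (alpha theta : R) : Prop :=
  (0 < alpha < 1 /\ - alpha < theta) \/
  (alpha < 0 /\ exists k : nat, (0 < k)%N /\ theta = - (k%:R * alpha)).

(* Main.v *)
Require Import Defs.
From HB Require Import structures.
From mathcomp Require Import all_boot all_order all_algebra.
From mathcomp Require Import classical_sets boolp functions reals constructive_ereal ereal esum sequences.
From mathcomp Require Import ring lra.
Import Order.TTheory GRing.Theory Num.Theory.
Set Implicit Arguments. Unset Strict Implicit. Unset Printing Implicit Defensive.

Fixpoint ok_from (p s : seq nat) : bool :=
  if s is a :: s' then (a <= size (undup p))%N && ok_from (rcons p a) s'
  else true.
Definition okS s := ok_from [::] s.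

Lemma ok_from_cat p s t : ok_from p (s ++ t) = ok_from p s && ok_from (p ++ s) t.
Proof.
elim: s p => [|a s IH] p /=; first by rewrite cats0.
by rewrite IH cat_rcons andbA.
Qed.

Lemma okS_rcons s a : okS (rcons s a) = okS s && (a <= size (undup s))%N.
Proof. by rewrite /okS -cats1 ok_from_cat /= andbT. Qed.

Lemma size_undup_rcons (s : seq nat) (a : nat) :
  size (undup (rcons s a)) = (size (undup s) + (a \notin s))%N.
Proof.
rewrite -cats1 undup_cat /= size_cat /= size_filter.
have := count_predC (fun x => x \in [:: a]) (undup s).
have -> : count (fun x => x \in [:: a]) (undup s) = (a \in s).
  rewrite (eq_count (a2 := pred1 a)); last by move=> x; rewrite inE.
  by rewrite count_uniq_mem ?undup_uniq // mem_undup.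
have -> : count (predC (fun x => x \in [:: a])) (undup s) = count (fun x => x \notin [:: a]) (undup s) by [].
move=> H; rewrite -H.
by case: (a \in s); rewrite /= ?addn0 ?add0n ?addn1 // addnC.
Qed.

Lemma okS_mem s : okS s -> forall x, (x \in s) = (x < size (undup s))%N.
Proof.
elim/last_ind: s => [|s a IH]; first by [].
rewrite okS_rcons => /andP[oks ha] x.
rewrite size_undup_rcons -cats1 mem_cat inE.
case ain: (a \in s) => /=.
  rewrite addn0 -(IH oks); case: (x =P a) => [->|_]; by rewrite ?ain ?orbT ?orbF.
have aV : a = size (undup s).
  by apply/eqP; rewrite eqn_leq ha /= leqNgt -(IH oks) ain.
by rewrite addn1 ltnS leq_eqVlt (IH oks) -aV orbC.
Qed.

Lemma ok_map_inj (rho : nat -> nat) (s : seq nat) :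
  injective rho -> okS s -> okS (map rho s) -> map rho s = s.
Proof.
move=> inj; elim/last_ind: s => [//|s a IH].
rewrite map_rcons !okS_rcons => /andP[oks ha] /andP[okr hr].
have e := IH oks okr; rewrite e in hr *.
have fx : {in s, rho =1 id} by apply/eq_in_map; rewrite map_id.
congr rcons.
case ain: (a \in s); first by rewrite fx.
have aV : a = size (undup s).
  by apply/eqP; rewrite eqn_leq ha /= leqNgt -(okS_mem oks) ain.
have rin : rho a \notin s.
  apply/negP => h; have := fx _ h => /= /inj ra.
  by move: h; rewrite ra ain.
have -> : rho a = size (undup s) by apply/eqP; rewrite eqn_leq hr /= leqNgt -(okS_mem oks) rin.
by [].
Qed.

Definition swapn (u v x : nat) : nat :=
  if x == u then v else if x == v then u else x.

Lemma swapnK u v : cancel (swapn u v) (swapn u v).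
Proof.
move=> x; rewrite /swapn.
case: (x =P u) => [->|xu]; first by rewrite eqxx; case: (v =P u) => [->|].
case: (x =P v) => [->|xv]; first by rewrite eqxx.
by move/eqP/negPf: xu => ->; move/eqP/negPf: xv => ->.
Qed.

Lemma exists_canon (s : seq nat) :
  exists rho : nat -> nat, bijective rho /\ okS (map rho s).
Proof.
elim/last_ind: s => [|s a [rho [bij ok]]]; first by exists id; split => //; exists id.
case ain: (a \in s).
  exists rho; split => //; rewrite map_rcons okS_rcons ok /=.
  by apply: ltnW; rewrite -(okS_mem ok) map_f.
pose t := map rho s.
pose rho2 := fun x => swapn (size (undup t)) (rho a) (rho x).
have inj := bij_inj bij.
have rat : rho a \notin t by rewrite /t (mem_map inj) ain.
have e : map rho2 s = t.
  rewrite /t; apply/eq_in_map => x xs; rewrite /rho2 /swapn.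
  have rxt : rho x \in t by rewrite map_f.
  have := rxt; rewrite (okS_mem ok) => lt.
  rewrite ifF; last by apply/negbTE; rewrite neq_ltn lt.
  rewrite ifF //; apply/negbTE; apply: contra rat => /eqP <-; by [].
exists rho2; split.
  apply: bij_comp => //; exists (swapn (size (undup t)) (rho a)); exact: swapnK.
rewrite map_rcons okS_rcons e ok /= /rho2 /swapn eqxx.
by case: ifP => // /eqP <-.
Qed.

Lemma sn_refl h : same_network h h.
Proof. exists id; split; first by exists id.
by rewrite (@eq_map _ _ (map id) id) ?map_id // => x; rewrite map_id. Qed.

Lemma mapmapK (f g : nat -> nat) : cancel f g -> cancel (map (map f)) (map (map g)).
Proof. by move=> c; apply: mapK; apply: mapK. Qed.

Lemma sn_sym h1 h2 : same_network h1 h2 -> same_network h2 h1.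
Proof.
move=> [rho [[g c1 c2] ->]]; exists g; split; first by exists rho.
by rewrite mapmapK.
Qed.

Lemma sn_trans h1 h2 h3 :
  same_network h1 h2 -> same_network h2 h3 -> same_network h1 h3.
Proof.
move=> [r1 [b1 ->]] [r2 [b2 ->]]; exists (r2 \o r1); split; first exact: bij_comp.
by rewrite -map_comp; apply: eq_map => x /=; rewrite -map_comp.
Qed.

Lemma sn_size h1 h2 : same_network h1 h2 -> size h2 = size h1.
Proof. by move=> [rho [_ ->]]; rewrite size_map. Qed.

Lemma sn_map (rho : nat -> nat) h : bijective rho -> same_network h (map (map rho) h).
Proof. by move=> b; exists rho. Qed.

Lemma flatten_mapmap (rho : nat -> nat) (h : iproc) :
  flatten (map (map rho) h) = map rho (flatten h).
Proof. by rewrite map_flatten. Qed.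

Lemma ok_uniq h1 h2 : okS (flatten h1) -> okS (flatten h2) ->
  same_network h1 h2 -> h1 = h2.
Proof.
move=> o1 o2 [rho [b e]]; subst h2.
rewrite flatten_mapmap in o2.
have e := ok_map_inj (bij_inj b) o1 o2.
have fx : {in flatten h1, rho =1 id} by apply/eq_in_map; rewrite map_id.
symmetry; rewrite -[RHS]map_id; apply/eq_in_map => x xh /=.
rewrite -[RHS]map_id; apply/eq_in_map => y yx /=.
by apply: fx; apply/flattenP; exists x.
Qed.

Definition crho (g : iproc) : nat -> nat :=
  proj1_sig (cid (exists_canon (flatten g))).
Definition canon (g : iproc) : iproc := map (map (crho g)) g.

Lemma crho_bij g : bijective (crho g).
Proof. by rewrite /crho; case: cid => rho []. Qed.

Lemma canon_sn g : same_network g (canon g).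
Proof. exact: sn_map (crho_bij g). Qed.

Lemma canon_ok g : okS (flatten (canon g)).
Proof. by rewrite /canon flatten_mapmap /crho; case: cid => rho []. Qed.

Lemma size_canon g : size (canon g) = size g.
Proof. by rewrite size_map. Qed.

Lemma ok_take n (h : iproc) : okS (flatten h) -> okS (flatten (take n h)).
Proof.
by rewrite -{1}(cat_take_drop n h) flatten_cat /okS ok_from_cat => /andP[].
Qed.

Lemma nth_mapmap (rho : nat -> nat) (h : iproc) i :
  nth [::] (map (map rho) h) i = map rho (nth [::] h i).
Proof.
case: (ltnP i (size h)) => hi; first by rewrite (nth_map [::]).
by rewrite !nth_default ?size_map.
Qed.

Section Esum.
Variable R : realType.
Local Open Scope ring_scope.
Local Open Scope ereal_scope.

Lemma esum_cons (T : choiceType) k (f : seq T -> \bar R) : (forall s, 0 <= f s) ->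
  \esum_(s in [set s : seq T | size s = k.+1]) f s =
  \esum_(a in [set: T]) \esum_(r in [set r : seq T | size r = k]) f (a :: r).
Proof.
move=> f0; rewrite esum_esum; last by move=> *; exact: f0.
apply: (reindex_esum _ _ (fun p => p.1 :: p.2)); split.
- by move=> [a r] /= [_ hr]; rewrite /= hr.
- by move=> [a r] [b t] /= _ _ [-> ->].
- by move=> [|a r] //= [hr]; exists (a, r).
Qed.

Lemma esum_size0 (T : choiceType) (f : seq T -> \bar R) : 0 <= f [::] ->
  \esum_(s in [set s : seq T | size s = 0%N]) f s = f [::].
Proof.
move=> f0; rewrite (_ : [set s : seq T | size s = 0%N]%classic = [set [::]]%classic) ?esum_set1 //.
by apply/seteqP; split => s /=; [move/size0nil | move->].
Qed.

Lemma esum_fin_nat (f : nat -> \bar R) N : (forall a, 0 <= f a) ->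
  (forall a, (N <= a)%N -> f a = 0) ->
  \esum_(a in [set: nat]) f a = \sum_(a < N) f a.
Proof.
move=> f0 fz; rewrite -nneseries_esumT // (nneseries_split 0 N) //.
rewrite add0n eseries0 ?adde0; last by move=> i hi _; exact: fz.
by rewrite big_mkord.
Qed.

Lemma esum_bysize (f : seq nat -> \bar R) : (forall s, 0 <= f s) ->
  \esum_(s in [set: seq nat]) f s =
  \esum_(k in [set: nat]) \esum_(x in [set x : seq nat | size x = k]) f x.
Proof.
move=> f0; rewrite esum_esum; last by move=> *; exact: f0.
apply: (reindex_esum _ _ (fun p => p.2)); split.
- by [].
- by move=> [k x] [l y] /set_mem [_ /= <-] /set_mem [_ /= <-] /= ->.
- by move=> x _; exists (size x, x).
Qed.

Lemma esumZ_nat (c : R) (f : nat -> \bar R) : (0 <= c)%R -> (forall k, 0 <= f k) ->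
  \esum_(k in [set: nat]) (c%:E * f k) = c%:E * \esum_(k in [set: nat]) f k.
Proof.
move=> c0 f0; rewrite -!nneseries_esumT //; first exact: nneseriesZl.
by move=> n; apply: mule_ge0.
Qed.

Lemma esum_restrict (T : choiceType) (A B : set T) (f : T -> \bar R) :
  (forall x, A x -> ~ B x -> f x = 0) ->
  \esum_(x in A) f x = \esum_(x in A `&` B) f x.
Proof.
move=> fz; rewrite esum_mkcondr; apply: eq_esum => x Ax.
case: (boolP (x \in B)) => // /negP nb.
by rewrite fz // => bx; apply: nb; exact: mem_set.
Qed.

End Esum.

Section Prob.
Variables (R : realType) (alpha theta : R) (nu : nat -> R).
Local Open Scope ring_scope.
Hypothesis hp : hw_param alpha theta.
Hypothesis hnu0 : forall k, 0 <= nu k.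
Hypothesis hnu1 : (\esum_(k in [set: nat]) (nu k)%:E = 1%E).

Local Notation edge := (hw_edge_prob alpha theta).
Local Notation choice := (hw_choice alpha theta).
Local Notation weight := (hw_weight alpha theta).
Local Notation aux := (hw_hist_prob_aux alpha theta nu).
Local Notation Vp s := (size (undup s)).
Definition E s := edge [::] s.

Lemma alpha_lt1 : alpha < 1.
Proof. by case: hp => [[/andP[_ h] _]|[h _]] //; lra. Qed.

Lemma Npos N : (0 < N)%N -> 0 < N%:R + theta.
Proof.
move=> N0; have h1 : 1 <= N%:R :> R by rewrite ler1n.
case: hp => [[/andP[a0 a1] ht]|[a0 [k [k0 ->]]]]; first lra.
have : 1 <= k%:R :> R by rewrite ler1n.
nra.
Qed.

Lemma edge_cat p x y : edge p (x ++ y) = edge p x * edge (p ++ x) y.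
Proof.
elim: x p => [|a x IH] p /=; first by rewrite mul1r cats0.
by rewrite IH cat_rcons mulrA.
Qed.

Lemma hist_flat p h : aux p h = (\prod_(x <- h) nu (size x)) * edge p (flatten h).
Proof.
elim: h p => [|x h IH] p /=; first by rewrite big_nil mul1r.
rewrite IH big_cons edge_cat; ring.
Qed.

Lemma hist_cat p h1 h2 : aux p (h1 ++ h2) = aux p h1 * aux (p ++ flatten h1) h2.
Proof.
elim: h1 p => [|x h1 IH] p /=; first by rewrite mul1r cats0.
by rewrite IH catA !mulrA.
Qed.

Lemma weight_big p a : (Vp p < a)%N -> weight p a = 0.
Proof.
move=> ha; rewrite /hw_weight /= ifF ?ifF //; first by rewrite gtn_eqF.
by apply/negbTE; rewrite -leqNgt ltnW.
Qed.

Lemma choice_big p a : (Vp p < a)%N -> choice p a = 0.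
Proof.
move=> ha; rewrite /hw_choice; case: p ha => [|b p] ha; first by case: a ha.
by rewrite weight_big ?mul0r.
Qed.

Lemma edge_zero p x : ~~ ok_from p x -> edge p x = 0.
Proof.
elim: x p => [|a x IH] p //=; rewrite negb_and => /orP[h|h].
  by rewrite choice_big ?mul0r // ltnNge.
by rewrite IH ?mulr0.
Qed.

Lemma E_rcons s a : E (rcons s a) = E s * choice s a.
Proof. by rewrite /E -cats1 edge_cat /= mulr1. Qed.

Lemma sum_count N (p : seq nat) : (forall x, x \in p -> (x < N)%N) ->
  (\sum_(i < N) count_mem (i : nat) p)%N = size p.
Proof.
elim: p => [|a p IH] H /=; first by rewrite big1.
rewrite big_split /= IH; last by move=> x xp; apply: H; rewrite inE xp orbT.
have ha : (a < N)%N by apply: H; rewrite mem_head.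
rewrite (bigD1 (Ordinal ha)) //= eqxx big1 ?add1n // => i ine.
case: eqP => // ai; case/eqP: ine; apply: val_inj; by rewrite /= ai.
Qed.

Lemma den p : okS p -> p != [::] ->
  \sum_(i < (Vp p).+1) weight p i = (size p)%:R + theta.
Proof.
move=> ok pn; rewrite big_ord_recr /=.
have -> : \sum_(i < Vp p) weight p i =
          \sum_(i < Vp p) ((count_mem (i : nat) p)%:R - alpha).
  by apply: eq_bigr => i _; rewrite /hw_weight /= ltn_ord.
rewrite sumrB -natr_sum sum_count; last by move=> x; rewrite (okS_mem ok).
rewrite sumr_const card_ord /hw_weight /= ltnn eqxx -mulr_natr.
ring.
Qed.

Lemma choiceE p a : p != [::] -> okS p ->
  choice p a = weight p a / ((size p)%:R + theta).
Proof. by case: p => // b p _ ok; rewrite /hw_choice den. Qed.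

Definition Gf n := \prod_(1 <= c < n) (c%:R - alpha).
Definition Wf (s : seq nat) := (\prod_(1 <= j < Vp s) (theta + alpha * j%:R)) *
   \prod_(l <- undup s) Gf (count_mem l s).
Definition Df N := \prod_(1 <= t < N) (t%:R + theta).

Lemma Wnat s : okS s -> Wf s = (\prod_(1 <= j < Vp s) (theta + alpha * j%:R)) *
   \prod_(l < Vp s) Gf (count_mem (l : nat) s).
Proof.
move=> ok; rewrite /Wf; congr (_ * _).
rewrite (perm_big (index_iota 0 (Vp s))) /=; first by rewrite big_mkord.
rewrite /index_iota subn0.
apply: uniq_perm; [exact: undup_uniq | exact: iota_uniq | move=> x].
by rewrite mem_undup mem_iota add0n leq0n (okS_mem ok).
Qed.

Lemma Gf_rec n : (0 < n)%N -> Gf n.+1 = Gf n * (n%:R - alpha).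
Proof. by move=> n0; rewrite /Gf big_nat_recr. Qed.

Lemma Wrcons s a : okS (rcons s a) -> s != [::] ->
  Wf (rcons s a) = Wf s * weight s a.
Proof.
move=> ok sn; move: (ok); rewrite okS_rcons => /andP[oks ha].
have V0 : (0 < Vp s)%N.
  case: s sn oks {ok ha} => // b s' _ oks.
  by apply: (leq_ltn_trans (leq0n b)); rewrite -(okS_mem oks) mem_head.
rewrite !Wnat // size_undup_rcons.
have cnt l : count_mem l (rcons s a) = (count_mem l s + (a == l))%N.
  by rewrite -cats1 count_cat /= addn0.
case ain: (a \in s).
  rewrite /= addn0.
  have ha' : (a < Vp s)%N by rewrite -(okS_mem oks).
  rewrite /hw_weight /= ha' -mulrA; congr (_ * _).
  rewrite (bigD1 (Ordinal ha')) //= [in RHS](bigD1 (Ordinal ha')) //=.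
  rewrite cnt eqxx addn1 Gf_rec; last by rewrite -has_count has_pred1 ain.
  rewrite (eq_bigr (fun i : 'I_(Vp s) => Gf (count_mem (i : nat) s))); last first.
    move=> i ine; rewrite cnt; case: eqP => [ai|_]; last by rewrite addn0.
    by case/eqP: ine; apply: val_inj; rewrite /= ai.
  ring.
have aV : a = Vp s.
  by apply/eqP; rewrite eqn_leq ha /= leqNgt -(okS_mem oks) ain.
subst a.
rewrite /= addn1 big_nat_recr //= big_ord_recr /= /hw_weight /= ltnn eqxx.
rewrite (eq_bigr (fun i : 'I_(Vp s) => Gf (count_mem (i : nat) s))); last first.
  by move=> i _; rewrite cnt gtn_eqF ?addn0.
rewrite cnt eqxx.
have -> : count_mem (Vp s) s = 0%N.
  by apply/count_memPn; rewrite (okS_mem oks) ltnn.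
rewrite add0n.
have -> : Gf true = 1 by rewrite /Gf big_geq.
ring.
Qed.

Lemma Df_neq0 N : Df N != 0.
Proof.
rewrite /Df big_nat_cond; apply: lt0r_neq0.
apply: (big_ind (fun x => 0 < x)) => //; first exact: mulr_gt0.
by move=> i /andP[/andP[hi _] _]; apply: Npos.
Qed.

Lemma E_closed s : okS s -> E s * Df (size s) = Wf s.
Proof.
elim/last_ind: s => [|s a IH] ok.
  by rewrite /E /Df /Wf /= big_nil !big_geq ?mulr1.
case: (altP (s =P [::])) => [se|sn].
  subst s; move: ok; rewrite okS_rcons /= leqn0 => /eqP ->.
  by rewrite /E /Df /Wf /Gf /= big_cons big_nil !big_geq // /hw_choice /= !mulr1.
move: (ok); rewrite okS_rcons => /andP[oks ha].
have N0 : (0 < size s)%N by case: s sn {IH ok oks ha}.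
rewrite E_rcons size_rcons /Df big_nat_recr //= -/(Df _) Wrcons // -(IH oks).
rewrite choiceE //.
have hN : (size s)%:R + theta != 0 by apply: lt0r_neq0; apply: Npos.
by field.
Qed.

Lemma W_inv (rho : nat -> nat) s s' : injective rho -> perm_eq s s' ->
  Wf (map rho s') = Wf s.
Proof.
move=> inj hs; rewrite /Wf undup_map_inj // size_map.
have hu : perm_eq (undup s) (undup s') by apply: perm_undup; apply: perm_mem.
rewrite (perm_size hu) big_map; congr (_ * _).
rewrite [RHS](perm_big (undup s') hu); apply: eq_bigr => l _; congr Gf.
rewrite count_map; transitivity (count (pred1 l) s').
  by apply: eq_count => x /=; exact: inj_eq.
by rewrite (permP hs).
Qed.

Lemma E_inv (rho : nat -> nat) s s' : okS s -> okS (map rho s') ->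
  injective rho -> perm_eq s s' -> E (map rho s') = E s.
Proof.
move=> os ot inj hs; apply: (mulIf (Df_neq0 (size s))) => /=.
rewrite E_closed // [X in Df X](perm_size hs) -(size_map rho) E_closed //.
exact: W_inv.
Qed.


Definition good p := okS p && ((p == [::]) || (0 <= theta + alpha * (Vp p)%:R)).

Lemma choice_ge0 p a : good p -> 0 <= choice p a.
Proof.
case/andP => ok hg; case: (altP (p =P [::])) => [->|pn].
  by rewrite /hw_choice ler0n.
have s0 : (0 < size p)%N by rewrite lt0n size_eq0.
rewrite choiceE //; apply: divr_ge0; last by apply/ltW/Npos.
rewrite /hw_weight /=; case: ifP => ha.
  have c0 : (0 < count_mem a p)%N by rewrite -has_count has_pred1 (okS_mem ok).
  have : 1 <= (count_mem a p)%:R :> R by rewrite ler1n.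
  have := alpha_lt1; lra.
case: ifP => // _; by move: hg; rewrite (negbTE pn).
Qed.

Lemma choice_good p a : good p -> choice p a != 0 -> good (rcons p a).
Proof.
move=> gp; move: (gp) => /andP[ok hg].
case: (altP (p =P [::])) => [pe|pn] hc.
  subst p; have a0 : a = 0%N.
    by move: hc; rewrite /hw_choice /=; case: a => // n; rewrite /= mulr0n eqxx.
  subst a; rewrite /good /=.
  case: hp => [[/andP[a0 _] ht]|[a0 [k [k0 ->]]]]; first lra.
  have : 1 <= k%:R :> R by rewrite ler1n.
  nra.
have ha : (a <= Vp p)%N.
  by rewrite leqNgt; apply: contra hc => h; apply/eqP; exact: choice_big h.
apply/andP; split; first by rewrite okS_rcons ok ha.
apply/orP; right; rewrite size_undup_rcons.
case ain: (a \in p) => /=; first by rewrite addn0; move: hg; rewrite (negbTE pn).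
have aV : a = Vp p.
  by apply/eqP; rewrite eqn_leq ha /= leqNgt -(okS_mem ok) ain.
subst a.
have hw : theta + alpha * (Vp p)%:R != 0.
  move: hc; rewrite choiceE //; apply: contra.
  by rewrite /hw_weight /= ltnn eqxx => /eqP ->; rewrite mul0r.
have hg' : 0 <= theta + alpha * (Vp p)%:R by move: hg; rewrite (negbTE pn).
have hpos : 0 < theta + alpha * (Vp p)%:R by rewrite lt_neqAle eq_sym hw hg'.
case: hp => [[/andP[a0 _] _]|[a0 [k [k0 ek]]]].
  rewrite natrD mulrDr mulr1; lra.
rewrite ek in hpos *.
have hk : (Vp p < k)%N.
  rewrite ltnNge; apply/negP => hkV.
  have : (k%:R <= (Vp p)%:R :> R) by rewrite ler_nat.
  nra.
have : ((Vp p + 1)%:R <= k%:R :> R) by rewrite ler_nat addn1.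
nra.
Qed.

Lemma choice_sum p : good p -> \sum_(a < (Vp p).+1) choice p a = 1.
Proof.
case/andP => ok _; case: (altP (p =P [::])) => [->|pn].
  by rewrite /= big_ord1 /hw_choice /=.
have s0 : (0 < size p)%N by rewrite lt0n size_eq0.
under eq_bigr do rewrite choiceE //.
by rewrite -mulr_suml den // divff //; apply: lt0r_neq0; apply: Npos.
Qed.

Lemma edge_ge0 p x : good p -> 0 <= edge p x /\ (edge p x != 0 -> good (p ++ x)).
Proof.
elim: x p => [|a x IH] p gp /=; first by split; [exact: ler01 | rewrite cats0].
have c0 := choice_ge0 a gp.
case: (altP (choice p a =P 0)) => [->|hc].
  by rewrite mul0r; split => //; rewrite eqxx.
have [e0 eg] := IH _ (choice_good gp hc).
split; first exact: mulr_ge0.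
move=> h; rewrite -cat_rcons; apply: eg.
by apply: contra h => /eqP ->; rewrite mulr0.
Qed.

Lemma hist_ge0 p h : good p -> 0 <= aux p h.
Proof.
elim: h p => [|x h IH] p gp /=; first exact: ler01.
have [e0 eg] := edge_ge0 x gp.
case: (altP (edge p x =P 0)) => [->|hn]; first by rewrite mulr0 mul0r.
by apply: mulr_ge0; [apply: mulr_ge0 | exact: IH (eg hn)].
Qed.

Lemma edge_marg k : forall p c, good p -> 0 <= c ->
  \esum_(x in [set x : seq nat | size x = k]) (c * edge p x)%:E = c%:E.
Proof.
elim: k => [|k IH] p c gp c0.
  by rewrite esum_size0 /= ?mulr1 // lee_fin mulr1.
rewrite esum_cons; last first.
  by move=> x; rewrite lee_fin; apply: mulr_ge0 => //; case: (edge_ge0 x gp).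
transitivity (\esum_(a in [set: nat]) (c * choice p a)%:E).
  apply: eq_esum => a _ /=.
  case: (altP (choice p a =P 0)) => [h|hc].
    by rewrite h mulr0; apply: esum1 => r _; rewrite mul0r mulr0.
  rewrite -(IH (rcons p a) (c * choice p a)).
  - by apply: eq_esum => r _ /=; rewrite mulrA.
  - exact: choice_good.
  - by apply: mulr_ge0 => //; exact: choice_ge0.
rewrite (esum_fin_nat (N := (Vp p).+1)).
- by rewrite sumEFin -mulr_sumr choice_sum // mulr1.
- by move=> a; rewrite lee_fin; apply: mulr_ge0 => //; exact: choice_ge0.
- by move=> a ha; rewrite choice_big ?mulr0.
Qed.

Lemma hist_marg j : forall p c, good p -> 0 <= c ->
  \esum_(r in [set r : iproc | size r = j]) (c * aux p r)%:E = c%:E.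
Proof.
elim: j => [|j IH] p c gp c0.
  by rewrite esum_size0 /= ?mulr1 // lee_fin mulr1.
rewrite esum_cons; last first.
  by move=> x; rewrite lee_fin; apply: mulr_ge0 => //; exact: hist_ge0.
transitivity (\esum_(x in [set: seq nat]) (c * nu (size x) * edge p x)%:E).
  apply: eq_esum => x _ /=.
  case: (altP (edge p x =P 0)) => [h|hn].
    by rewrite h !mulr0; apply: esum1 => r _; rewrite mul0r mulr0.
  rewrite -(IH (p ++ x) (c * nu (size x) * edge p x)).
  - by apply: eq_esum => r _ /=; rewrite !mulrA.
  - exact: (edge_ge0 x gp).2 hn.
  - by apply: mulr_ge0; [apply: mulr_ge0 | case: (edge_ge0 x gp)].
rewrite esum_bysize; last first.
  move=> x; rewrite lee_fin; apply: mulr_ge0; [exact: mulr_ge0 | by case: (edge_ge0 x gp)].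
transitivity (\esum_(k in [set: nat]) (c * nu k)%:E).
  apply: eq_esum => k _; rewrite -(edge_marg k gp); last exact: mulr_ge0.
  by apply: eq_esum => x /= ->.
under eq_esum do rewrite EFinM.
by rewrite esumZ_nat // hnu1 mule1.
Qed.


Local Notation P := (hw_hist_prob alpha theta nu).
Local Notation okset := [set h : iproc | okS (flatten h)]%classic.

Lemma P_ge0 h : 0 <= P h.
Proof. exact: hist_ge0. Qed.

Lemma P_zero h : ~~ okS (flatten h) -> P h = 0.
Proof. by move=> nok; rewrite /hw_hist_prob hist_flat edge_zero ?mulr0. Qed.

Lemma P_inv (L : seq nat) (h : iproc) : perm_eq L (iota 0 (size h)) ->
  okS (flatten h) -> P (canon (map (nth [::] h) L)) = P h.
Proof.
move=> pL ok; set g := map (nth [::] h) L.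
have pg : perm_eq g h by rewrite /g -{2}(mkseq_nth [::] h) /mkseq; exact: perm_map.
rewrite /hw_hist_prob !hist_flat /canon big_map.
rewrite (eq_bigr (fun x => nu (size x))); last by move=> x _; rewrite size_map.
rewrite (perm_big _ pg); congr (_ * _).
rewrite flatten_mapmap.
apply: (E_inv (s := flatten h)) => //.
- by have := canon_ok g; rewrite /canon flatten_mapmap.
- exact: bij_inj (crho_bij g).
- by apply: perm_flatten; rewrite perm_sym.
Qed.

Lemma main_sec (sigma tau : nat -> nat) : cancel sigma tau -> cancel tau sigma ->
  forall (n m : nat), (forall i, (i < n)%N -> (tau i < m)%N) ->
  forall y : iproc,
    hw_law_perm alpha theta nu tau n m y = hw_law alpha theta nu n y.
Proof.
move=> c1 c2 n m ht y; rewrite /hw_law_perm /hw_law.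
set sel := fun h : iproc => [seq nth [::] h (tau i) | i <- iota 0 n].
have ssel h : size (sel h) = n by rewrite size_map size_iota.
case: (eqVneq (size y) n) => [sy|sy]; last first.
  transitivity (0 : \bar R); first apply: esum1.
    by move=> h [_ hh]; move: sy; rewrite (sn_size hh) size_map size_iota eqxx.
  symmetry; apply: esum1.
  by move=> h [sh hh]; move: sy; rewrite (sn_size hh) sh eqxx.
set c := canon y.
have cok : okS (flatten c) := canon_ok y.
have yc : same_network y c := canon_sn y.
have sc : size c = n by rewrite size_canon.
have -> : \esum_(h in [set h : iproc | size h = n /\ same_network h y]%classic) (P h)%:E
          = (P c)%:E.
  rewrite (esum_restrict (B := okset)); last first.
    by move=> h _ /negP nok; rewrite P_zero.
  rewrite (_ : (_ `&` _)%classic = [set c]%classic) ?esum_set1 ?lee_fin ?P_ge0 //.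
  apply/seteqP; split => h /=.
    by move=> [[sh hy] hok]; apply: ok_uniq => //; exact: sn_trans hy yc.
  by move=> ->; split; [split; [rewrite size_canon | exact: sn_sym] | exact: cok].
pose L0 := map tau (iota 0 n).
pose L := L0 ++ [seq i <- iota 0 m | i \notin L0].
have uL0 : uniq L0 by rewrite map_inj_uniq ?iota_uniq //; exact: can_inj c2.
have L0m x : x \in L0 -> (x < m)%N.
  by case/mapP => i; rewrite mem_iota add0n => /andP[_ hi] ->; exact: ht.
have pL : perm_eq L (iota 0 m).
  apply: uniq_perm.
  - rewrite cat_uniq uL0 filter_uniq ?iota_uniq ?andbT //=.
    by apply/hasPn => x; rewrite mem_filter => /andP[hx _].
  - exact: iota_uniq.
  - move=> x; rewrite mem_cat mem_filter mem_iota /= add0n.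
    by case: (boolP (x \in L0)) => /= hx; rewrite ?(L0m _ hx).
have uL : uniq L by rewrite (perm_uniq pL) iota_uniq.
have sL : size L = m by rewrite (perm_size pL) size_iota.
have nm : (n <= m)%N by rewrite -sL size_cat size_map size_iota leq_addr.
pose ph (g : iproc) := map (nth [::] g) L.
pose L' := map (fun i => index i L) (iota 0 m).
pose ph' (g : iproc) := map (nth [::] g) L'.
have sph g : size (ph g) = m by rewrite size_map sL.
have sph' g : size (ph' g) = m by rewrite /ph' /L' !size_map size_iota.
have inv1 g : size g = m -> ph' (ph g) = g.
  move=> sg; rewrite /ph' /L' -map_comp -{2}(mkseq_nth [::] g) sg /mkseq.
  apply/eq_in_map => i; rewrite mem_iota add0n => /andP[_ hi] /=.
  have iL : i \in L by rewrite (perm_mem pL) mem_iota add0n hi.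
  rewrite (nth_map 0%N); last by rewrite ?sL -?sL index_mem.
  by rewrite (@nth_index nat 0%N i L iL).
have inv2 g : size g = m -> ph (ph' g) = g.
  move=> sg; apply: (@eq_from_nth _ [::]); first by rewrite sph sg.
  move=> i; rewrite sph => hi.
  have hLi : (nth 0 L i < m)%N.
    have : nth 0%N L i \in L by rewrite mem_nth ?sL.
    by rewrite (perm_mem pL) mem_iota add0n.
  rewrite (nth_map 0%N) ?sL //.
  rewrite /ph' (nth_map 0%N); last by rewrite /L' size_map size_iota.
  rewrite /L' (nth_map 0%N) ?size_iota // nth_iota // add0n.
  by rewrite index_uniq ?sL.
have phmap (rho : nat -> nat) g : ph (map (map rho) g) = map (map rho) (ph g).
  by rewrite /ph -map_comp; apply: eq_map => i; rewrite /= nth_mapmap.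
have phmap' (rho : nat -> nat) g : ph' (map (map rho) g) = map (map rho) (ph' g).
  by rewrite /ph' -map_comp; apply: eq_map => i; rewrite /= nth_mapmap.
have selE h : sel h = take n (ph h).
  rewrite /ph map_cat take_size_cat ?size_map ?size_iota //.
  by rewrite /sel /L0 -map_comp.
pose Phi h := canon (ph h).
pose S1 := ([set h : iproc | size h = m /\ same_network (sel h) y] `&` okset)%classic.
pose S2 := ([set h : iproc | size h = m /\ take n h = c] `&` okset)%classic.
have bij : set_bij S1 S2 Phi.
  split.
  - move=> h [[sh hy] hok]; split; last exact: canon_ok.
    split; first by rewrite size_canon sph.
    apply: ok_uniq => //; first by apply: ok_take; exact: canon_ok.
    apply: (sn_trans _ (sn_trans hy yc)); apply: sn_sym.
    rewrite /Phi /canon -map_take -selE; exact: sn_map (crho_bij _).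
  - move=> h1 h2 /set_mem [[s1 _] o1] /set_mem [[s2 _] o2] e.
    apply: ok_uniq => //.
    have e12 : same_network (ph h1) (ph h2).
      apply: (sn_trans (canon_sn _)); rewrite -/(Phi h1) e; apply: sn_sym; exact: canon_sn.
    case: e12 => rho [b e3].
    rewrite -(inv1 h1 s1) -(inv1 h2 s2) e3 phmap'.
    exact: sn_map.
  - move=> h' [[sh' th'] ok'].
    pose rho := crho (ph' h').
    have ephh : ph (canon (ph' h')) = map (map rho) h'.
      by rewrite /canon phmap inv2.
    exists (canon (ph' h')).
      split; last exact: canon_ok.
      split; first by rewrite size_canon sph'.
      rewrite selE ephh -map_take th'; apply: (sn_trans _ (sn_sym yc)).
      exact: sn_sym (sn_map _ (crho_bij _)).
    apply: ok_uniq => //; first exact: canon_ok.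
    apply: (sn_trans (sn_sym (canon_sn _))); rewrite ephh.
    exact: sn_sym (sn_map _ (crho_bij _)).
rewrite (esum_restrict (B := okset)); last by move=> h _ /negP nok; rewrite P_zero.
rewrite -/S1.
transitivity (\esum_(h in S1) (P (Phi h))%:E).
  apply: eq_esum => h [[sh _] hok].
  by rewrite /Phi P_inv // sh.
rewrite -(reindex_esum S1 S2 Phi (fun h => (P h)%:E)) //.
rewrite /S2 -esum_restrict; last by move=> h _ /negP nok; rewrite P_zero.
rewrite (reindex_esum [set r : iproc | size r = (m - n)%N]%classic
           [set h : iproc | size h = m /\ take n h = c]%classic (fun r => c ++ r)); last first.
  split.
  - move=> r /= sr; split; first by rewrite size_cat sc sr subnKC.
    by rewrite take_size_cat.
  - move=> r1 r2 _ _ /(congr1 (drop n)); by rewrite !drop_size_cat.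
  - move=> h /= [sh th]; exists (drop n h); first by rewrite size_drop sh.
    by rewrite -th cat_take_drop.
under eq_esum do rewrite /hw_hist_prob hist_cat /=.
case: (altP (P c =P 0)) => [Pc0|Pcn].
  rewrite Pc0; apply: esum1 => r _.
  by move: Pc0; rewrite /hw_hist_prob => ->; rewrite mul0r.
have gc : good (flatten c).
  move: Pcn; rewrite /hw_hist_prob hist_flat => hn.
  have hn' : edge [::] (flatten c) != 0.
    by apply: contra hn => /eqP ->; rewrite mulr0.
  exact: (edge_ge0 (flatten c) (isT : good [::])).2 hn'.
exact: (hist_marg (m - n) gc (P_ge0 c)).
Qed.

End Prob.

Theorem theorem5p1 (R : realType) (alpha theta : R) (nu : nat -> R) :
  hw_param alpha theta -> prob_on_pos nu ->
  forall (sigma tau : nat -> nat), cancel sigma tau -> cancel tau sigma ->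
  forall (n m : nat), (forall i, (i < n)%N -> (tau i < m)%N) ->
  forall y : iproc,
    hw_law_perm alpha theta nu tau n m y = hw_law alpha theta nu n y.
Proof.
move=> hp [_ [h1 h2]] sigma tau c1 c2 n m ht y.
exact: (main_sec hp h1 h2 c1 c2 ht).
Qed.
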